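(* For every integer $n\ge 1$, let $M_T(n)$ denote the maximum modulus of an independence root over all trees on $n$ vertices. Then $$M_T(n)\ge \begin{cases} 2^{\frac{n-1}{2}} & \text{if } n \text{ is odd},\\ 2^{\frac{n-6}{2}} & \text{if } n \text{ is even}.\end{cases}$$
   Context: For a finite simple graph $G$, the independence polynomial is $i(G,x)=\sum_{k=0}^{\alpha(G)} i_k x^k$, where $i_k$ is the number of independent sets of size $k$ in $G$ (with $i_0=1$) and $\alpha(G)$ is the independence number. Its complex roots are the independence roots of $G$. *)

(* Defs.v *)
From HB Require Import structures.
From mathcomp Require Import all_boot all_order all_algebra all_field.
Set Implicit Arguments. Unset Strict Implicit. Unset Printing Implicit Defensive.
Import Order.TTheory GRing.Theory Num.Theory.
Local Open Scope ring_scope.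

Definition simple_graph (T : finType) (e : rel T) : Prop :=
  symmetric e /\ irreflexive e.

Definition connected_graph (T : finType) (e : rel T) : Prop :=
  forall x y : T, connect e x y.

(* a cycle: a closed walk x, s_1, ..., s_k, x with x :: s duplicate-free,
   of length at least 3 *)
Definition has_cycle (T : finType) (e : rel T) : Prop :=
  exists (x : T) (s : seq T), [/\ (2 <= size s)%N, uniq (x :: s) & cycle e (x :: s)].

Definition is_tree (T : finType) (e : rel T) : Prop :=
  [/\ simple_graph e, connected_graph e & ~ has_cycle e].

Definition independent (T : finType) (e : rel T) (S : {set T}) : bool :=
  [forall x in S, forall y in S, ~~ e x y].

Definition indep_poly (T : finType) (e : rel T) : {poly algC} :=
  \sum_(S : {set T} | independent e S) 'X^#|S|.

Definition MT_bound (n : nat) : algC :=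
  if odd n then 2 ^+ ((n - 1) %/ 2)%N
  else 2 ^ (((n%:Z - 6) %/ 2)%Z).

(* Main.v *)
Require Import Defs.
From HB Require Import structures.
From mathcomp Require Import all_boot all_order all_algebra all_field.
From mathcomp Require Import zify ring lra.
Set Implicit Arguments. Unset Strict Implicit. Unset Printing Implicit Defensive.
Import Order.TTheory GRing.Theory Num.Theory.
Local Open Scope ring_scope.
Section Tree.
Variable N : nat.
Variable par : nat -> nat.
Hypothesis par_lt : forall j, (0 < j)%N -> (par j < j)%N.

Definition pe : rel 'I_N.+1 := fun i j =>
  ((val j != 0%N) && (val i == par (val j))) || ((val i != 0%N) && (val j == par (val i))).

Lemma pe_sym : symmetric pe.
Proof. by move=> i j; rewrite /pe orbC. Qed.

Lemma pe_irr : irreflexive pe.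
Proof.
move=> i; rewrite /pe orbb; apply/negP => /andP[h1 /eqP h2].
have := @par_lt (val i); rewrite lt0n h1 -h2 ltnn; by move=> /(_ isT).
Qed.

Lemma pe_conn0 (x : 'I_N.+1) : connect pe x ord0.
Proof.
have [m] := ubnP (val x); elim: m x => // m IH x hx.
have [x0|xn0] := eqVneq (val x) 0%N.
  by have -> : x = ord0 by apply: val_inj.
have hp : (par x < N.+1)%N by apply: ltn_trans (ltn_ord x); apply: par_lt; rewrite lt0n.
have h1 : pe x (Ordinal hp) by rewrite /pe /= xn0 eqxx orbT.
have h2 : connect pe (Ordinal hp) ord0.
  apply: IH => /=; apply: leq_trans (par_lt _) _; rewrite ?lt0n //.
exact: connect_trans (connect1 h1) h2.
Qed.

Lemma pe_connected : connected_graph pe.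
Proof.
move=> x y; apply: connect_trans (pe_conn0 x) _.
rewrite (sym_connect_sym pe_sym); exact: pe_conn0.
Qed.

Lemma exists_max (T : eqType) (f : T -> nat) (x : T) (s : seq T) :
  exists2 m, m \in x :: s & forall y, y \in x :: s -> (f y <= f m)%N.
Proof.
elim: s x => [|z s IH] x.
  by exists x => [|y]; rewrite ?inE // => /eqP->.
have [m hm hmax] := IH z.
case: (leqP (f x) (f m)) => h.
  exists m; first by rewrite inE hm orbT.
  by move=> y; rewrite inE => /orP[/eqP->|]//; apply: hmax.
exists x; first by rewrite inE eqxx.
move=> y; rewrite inE => /orP[/eqP->|/hmax hy]//; exact: leq_trans hy (ltnW h).
Qed.

Lemma pe_acyclic : ~ has_cycle pe.
Proof.
move=> [x [s [hs hu hc]]].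
have [m hm hmax] := exists_max (fun y : 'I_N.+1 => val y) x s.
case: (rot_to hm) => i s' hrot.
have hc' : cycle pe (m :: s') by rewrite -hrot rot_cycle.
have hu' : uniq (m :: s') by rewrite -hrot rot_uniq.
have hsz : (2 <= size s')%N.
  by have := congr1 size hrot; rewrite size_rot /= => -[<-].
have hin : forall y, y \in s' -> y \in x :: s by move=> y hy; rewrite -(mem_rot i) hrot inE hy orbT.
clear hrot hc hu.
case: s' hsz hc' hu' hin => [|a s'] //= hsz.
rewrite rcons_path => /andP[hma /andP[_ hbm]].
move=> /andP[]; rewrite inE negb_or => /andP[hma' hmb] hua hin.
set b := last a s' in hbm.
have hbin : b \in a :: s' by exact: mem_last.
have hab : a != b.
  case: s' hsz hua @b {hbin hmb hbm hin} => [|c s'] //= _ /andP[ha _].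
  apply/eqP => hab; move: ha; rewrite hab; by rewrite mem_last.
have hbm' : m != b by apply/eqP => hmb'; move: hbin; rewrite -hmb' inE (negbTE hma') (negbTE hmb).
have ltm : forall y, y \in a :: s' -> y != m -> (val y < val m)%N.
  move=> y hy hne; rewrite ltn_neqAle hmax ?hin // andbT.
  by apply: contra hne => /eqP h; apply/eqP/val_inj.
have ha : (val a < val m)%N by apply: ltm; rewrite ?mem_head // eq_sym.
have hb : (val b < val m)%N by apply: ltm; rewrite // eq_sym.
have pa : val a = par (val m).
  move: hma; rewrite /pe => /orP[/andP[h1 /eqP h2]|/andP[_ /eqP //]].
  have := @par_lt (val a); rewrite lt0n h1 -h2 => /(_ isT) h; exfalso.
  by move: (ltn_trans h ha); rewrite ltnn.
have pb : val b = par (val m).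
  move: hbm; rewrite /pe => /orP[/andP[_ /eqP //]|/andP[h1 /eqP h2]].
  have := @par_lt (val b); rewrite lt0n h1 -h2 => /(_ isT) h; exfalso.
  by move: (ltn_trans h hb); rewrite ltnn.
by move: hab; rewrite (_ : a = b) ?eqxx //; apply: val_inj; rewrite pa pb.
Qed.

Lemma pe_tree : is_tree pe.
Proof. split; [split; [exact: pe_sym|exact: pe_irr]|exact: pe_connected|exact: pe_acyclic]. Qed.
End Tree.
Section IP.
Variable T : finType.
Variable e : rel T.
Hypothesis esym : symmetric e.
Hypothesis eirr : irreflexive e.

Definition IP (U : {set T}) : {poly algC} :=
  \sum_(S : {set T} | (S \subset U) && independent e S) 'X^#|S|.

Lemma indep_polyE : indep_poly e = IP setT.
Proof. by apply: eq_bigl => S; rewrite subsetT. Qed.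

Lemma indepP (S : {set T}) : reflect (forall x y, x \in S -> y \in S -> ~~ e x y) (independent e S).
Proof.
apply: (iffP forall_inP) => [H x y hx hy | H x hx].
  exact: (forall_inP (H x hx)) y hy.
by apply/forall_inP => y hy; exact: H.
Qed.

Lemma indep0 : independent e set0.
Proof. by apply/indepP => x y; rewrite inE. Qed.

Lemma IP0 : IP set0 = 1.
Proof.
rewrite /IP (eq_bigl (fun S => S == set0)) ?big_pred1_eq ?cards0 ?expr0 //.
move=> S; rewrite subset0; case: eqP => // ->; exact: indep0.
Qed.

Lemma indepU1 v (S : {set T}) : independent e (v |: S) = independent e S && [forall y in S, ~~ e v y].
Proof.
apply/idP/andP => [/indepP H | [/indepP H /forall_inP H2]].
  split; first by apply/indepP => x y hx hy; apply: H; rewrite inE ?hx ?hy orbT.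
  by apply/forall_inP => y hy; apply: H; rewrite !inE ?eqxx ?hy ?orbT.
apply/indepP => x y; rewrite !inE => /orP[/eqP->|hx] /orP[/eqP->|hy].
- by rewrite eirr.
- exact: H2.
- rewrite esym; exact: H2.
- exact: H.
Qed.

Lemma subD_N v (U S : {set T}) : (S \subset U :\: (v |: [set w | e v w])) =
  [&& S \subset U, v \notin S & [forall y in S, ~~ e v y]].
Proof.
apply/idP/and3P.
  move/subsetP=> H; split.
  - by apply/subsetP=> x /H; rewrite inE => /andP[].
  - by apply/negP => /H; rewrite !inE eqxx.
  - by apply/forall_inP => y /H; rewrite !inE negb_or => /andP[/andP[_ ?]].
case=> /subsetP H1 H2 /forall_inP H3; apply/subsetP => x hx.
rewrite !inE negb_or H1 // H3 // !andbT.
by apply/eqP => exv; move: H2; rewrite -exv hx.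
Qed.

Lemma IP_del v (U : {set T}) : v \in U ->
  IP U = IP (U :\ v) + 'X * IP (U :\: (v |: [set w | e v w])).
Proof.
move=> vU; rewrite /IP (bigID (fun S : {set T} => v \in S)) /= addrC; congr (_ + _).
  by apply: eq_bigl => S; rewrite subsetD1 andbAC.
rewrite mulr_sumr (reindex_onto (fun S => v |: S) (fun S => S :\ v)); last first.
  by move=> S /andP[_ hv]; rewrite setD1K.
apply: eq_big => S.
  rewrite subD_N setU11 andbT indepU1 subUset sub1set vU /=.
  case hvS : (v \in S) => /=.
    rewrite !andbF /=; apply/negbTE/negP => /andP[_ /eqP hS].
    by move: hvS; rewrite -hS !inE eqxx.
  rewrite setU1K ?hvS ?eqxx //= !andbT -!andbA; congr (_ && _); exact: andbC.
move=> /andP[_ /eqP hS].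
have hvS : v \notin S by rewrite -hS !inE eqxx.
by rewrite cardsU1 hvS exprS.
Qed.

Lemma indep_sub (S S' : {set T}) : S' \subset S -> independent e S -> independent e S'.
Proof.
move=> /subsetP hs /indepP H; apply/indepP => x y hx hy; apply: H; exact: hs.
Qed.

Lemma IP_union (U W : {set T}) : U :&: W = set0 ->
  (forall u w, u \in U -> w \in W -> ~~ e u w) -> IP (U :|: W) = IP U * IP W.
Proof.
move=> hUW hE.
have hUW' : forall x, x \in U -> x \in W -> False.
  by move=> x hx hw; have := congr1 (fun S : {set T} => x \in S) hUW; rewrite !inE hx hw.
rewrite /IP mulr_suml.
rewrite (partition_big (fun S => S :&: U) (fun A => (A \subset U) && independent e A)); last first.
  move=> S /andP[hS hind]; rewrite subsetIr /=; apply: indep_sub hind; exact: subsetIl.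
apply: eq_bigr => A /andP[hA hindA].
rewrite mulr_sumr (reindex_onto (fun B => A :|: B) (fun S => S :&: W)); last first.
  move=> S /andP[/andP[hS _] /eqP hSA]; rewrite -hSA -setIUr; exact/setIidPl.
apply: eq_big => B.
  apply/idP/idP.
    move=> /andP[/andP[/andP[_ hind] _] /eqP hB]; rewrite -hB subsetIr /=.
    by apply: indep_sub hind; rewrite hB subsetUr.
  move=> /andP[hB hindB].
  have hAB : forall x, x \in A -> x \in B -> False.
    move=> x hx hx'; apply: (hUW' x); [exact: (subsetP hA) | exact: (subsetP hB)].
  apply/andP; split; first (apply/andP; split).
  - apply/andP; split; first exact: setUSS.
    apply/indepP => x y; rewrite !inE => /orP[hx|hx] /orP[hy|hy].
    + exact: (indepP _ hindA).
    + apply: hE; [exact: (subsetP hA) | exact: (subsetP hB)].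
    + rewrite esym; apply: hE; [exact: (subsetP hA) | exact: (subsetP hB)].
    + exact: (indepP _ hindB).
  - apply/eqP/setP => x; rewrite !inE.
    case hx : (x \in A); first by rewrite (subsetP hA).
    case hxB : (x \in B) => //=; case hxU : (x \in U) => //.
    by exfalso; apply: (hUW' x) => //; exact: (subsetP hB).
  - apply/eqP/setP => x; rewrite !inE.
    case hxB : (x \in B); first by rewrite (subsetP hB) // ?orbT ?andbT.
    rewrite orbF; case hx : (x \in A) => //=; case hxW : (x \in W) => //.
    by exfalso; apply: (hUW' x) => //; exact: (subsetP hA).
move=> /andP[/andP[_ /eqP hA'] /eqP hB'].
have hAB0 : #|A :&: B| = 0%N.
  apply/eqP; rewrite cards_eq0; apply/eqP/setP => x; rewrite !inE.
  apply/negbTE/negP => /andP[hx hx']; apply: (hUW' x); [exact: (subsetP hA) | ].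
  have : x \in (A :|: B) :&: W by rewrite hB'.
  by rewrite !inE => /andP[_ ?].
by rewrite -exprD -cardsUI hAB0 addn0.
Qed.

Lemma IP1 a : IP [set a] = 1 + 'X.
Proof.
rewrite (IP_del (set11 a)).
have -> : [set a] :\ a = set0 by apply/setP => x; rewrite !inE; case: eqP.
have -> : [set a] :\: (a |: [set w | e a w]) = set0.
  by apply/setP => x; rewrite !inE andbC; case: eqP.
by rewrite IP0 mulr1.
Qed.

Lemma IP2e a b : e a b -> IP [set a; b] = 1 + 'X *+ 2.
Proof.
move=> hab; have hne : a != b by apply: contraTneq hab => ->; rewrite eirr.
rewrite (IP_del (setU11 _ _)).
rewrite (_ : [set a; b] :\ a = [set b]); last first.
  by apply/setP => x; rewrite !inE; case: (eqVneq x a) => [->|] /=; rewrite ?(negbTE hne).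
rewrite (_ : [set a; b] :\: _ = set0); last first.
  apply/setP => x; rewrite !inE; case: (eqVneq x a) => //= _; case: (eqVneq x b) => [->|] //=; by rewrite ?hab ?andbF.
by rewrite IP1 IP0 mulr1 mulr2n addrA.
Qed.

Lemma IP2n a b : a != b -> ~~ e a b -> IP [set a; b] = (1 + 'X) ^+ 2.
Proof.
move=> hne hab; rewrite IP_union ?IP1 ?expr2 //.
  by apply/setP => x; rewrite !inE; case: (eqVneq x a) => [->|] /=; rewrite ?(negbTE hne) ?andbF ?andbT.
by move=> u w; rewrite !inE => /eqP-> /eqP->.
Qed.

Lemma IP3 a b c : a != b -> a != c -> b != c -> e a b -> e a c -> ~~ e b c ->
  IP [set a; b; c] = (1 + 'X) ^+ 2 + 'X.
Proof.
move=> hab hac hbc eab eac nbc.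
have ha : a \in [set a; b; c] by rewrite !inE eqxx.
rewrite (IP_del ha).
rewrite (_ : [set a; b; c] :\ a = [set b; c]); last first.
  apply/setP => x; rewrite !inE; case: (eqVneq x a) => [->|] /=; rewrite ?(negbTE hab) ?(negbTE hac) //.
rewrite (_ : [set a; b; c] :\: _ = set0); last first.
  apply/setP => x; rewrite !inE; case: (eqVneq x a) => [->|_] /=; rewrite ?andbF //.
  case: (eqVneq x b) => [->|_]; first by rewrite eab.
  by case: (eqVneq x c) => [->|_]; rewrite ?eac ?andbF.
by rewrite IP2n // IP0 mulr1.
Qed.
End IP.
Section Spider.
Variables (N k a : nat).
Hypothesis hN1 : (2 * k <= N)%N.
Hypothesis hN2 : (N <= 2 * k + 1)%N.
Hypothesis ha : (a <= 2 * k)%N.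

Definition spar (j : nat) : nat :=
  if (j <= k)%N then 0%N else if (j <= 2 * k)%N then (j - k)%N else a.

Lemma spar_cases j : [/\ (j <= k)%N & spar j = 0%N] \/
  [/\ (k < j <= 2 * k)%N & spar j = (j - k)%N] \/ [/\ (2 * k < j)%N & spar j = a].
Proof. rewrite /spar; case: ifP => h1; [|case: ifP => h2]; lia. Qed.

Lemma spar_lt j : (0 < j)%N -> (spar j < j)%N.
Proof. move=> hj; have := spar_cases j; lia. Qed.

Definition se := @pe N spar.

Lemma seE (x y : 'I_N.+1) : se x y =
  ((nat_of_ord y != 0%N) && (nat_of_ord x == spar y)) || ((nat_of_ord x != 0%N) && (nat_of_ord y == spar x)).
Proof. by []. Qed.

Lemma se_sym : symmetric se. Proof. exact: pe_sym. Qed.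
Lemma se_irr : irreflexive se. Proof. exact: pe_irr spar_lt. Qed.

Lemma eq_inord (x : 'I_N.+1) j : (j <= N)%N -> (x == inord j) = (nat_of_ord x == j).
Proof. by move=> hj; rewrite -val_eqE /= inordK. Qed.

Definition L m := [set x : 'I_N.+1 | (1 <= x <= m)%N || (k < x <= k + m)%N].
Definition E m := [set x : 'I_N.+1 | (k < x <= k + m)%N].

Lemma IPL m : (m <= k)%N -> IP se (L m) = (1 + 'X *+ 2) ^+ m.
Proof.
elim: m => [|m IH] hm.
  rewrite expr0 -(IP0 se); congr IP; apply/setP => x; rewrite !inE; lia.
have hm1 : (m.+1 <= N)%N by lia.
have hm2 : (k + m.+1 <= N)%N by lia.
rewrite (_ : L m.+1 = L m :|: [set inord m.+1; inord (k + m.+1)]); last first.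
  apply/setP => x; rewrite !inE !eq_inord //; apply/idP/idP; lia.
rewrite IP_union ?IP2e ?IH ?exprS 1?mulrC //.
- exact: ltnW.
- exact: pe_sym.
- exact: pe_irr spar_lt.
- by rewrite seE !inordK //; apply/orP; left; have := spar_cases (k + m.+1); lia.
- exact: pe_sym.
- apply/setP => x; rewrite !inE !eq_inord //; apply/negbTE; lia.
- move=> u w; rewrite !inE !eq_inord // => hu hw; rewrite seE.
  have := spar_cases u; have := spar_cases w; lia.
Qed.

Lemma IPE m : (m <= k)%N -> IP se (E m) = (1 + 'X) ^+ m.
Proof.
elim: m => [|m IH] hm.
  rewrite expr0 -(IP0 se); congr IP; apply/setP => x; rewrite !inE; lia.
have hm2 : (k + m.+1 <= N)%N by lia.
rewrite (_ : E m.+1 = E m :|: [set inord (k + m.+1)]); last first.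
  apply/setP => x; rewrite !inE !eq_inord //; apply/idP/idP; lia.
rewrite IP_union ?IP1 ?IH ?exprS 1?mulrC //.
all: try (exact: ltnW || exact: se_sym || exact: se_irr).
- apply/setP => x; rewrite !inE !eq_inord //; apply/negbTE; lia.
- move=> u w; rewrite !inE !eq_inord // => hu hw; rewrite seE.
  have := spar_cases u; have := spar_cases w; lia.
Qed.

Lemma top : indep_poly se =
  IP se [set x : 'I_N.+1 | (0 < x)%N] + 'X * IP se [set x : 'I_N.+1 | (0 < x)%N && (spar x != 0%N)].
Proof.
rewrite indep_polyE (IP_del se_sym se_irr (in_setT ord0)).
congr (_ + _); [|congr (_ * _)]; congr IP; apply/setP => x.
  by rewrite !inE andbT -val_eqE /= lt0n.
rewrite !inE andbT seE /= -val_eqE /=; have := spar_cases x; lia.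
Qed.

Ltac side := first
  [ exact: ltnW | exact: se_sym | exact: se_irr | lia
  | (apply/setP => x; rewrite !inE ?eq_inord; try (by lia); apply/negbTE;
     have := ltn_ord x; lia)
  | (move=> u w; rewrite !inE ?eq_inord; try (by lia); move=> hu hw; rewrite seE;
     have := spar_cases u; have := spar_cases w; have := ltn_ord u; have := ltn_ord w; lia)
  | (rewrite eq_inord ?inordK; try (by lia); lia)
  | (rewrite seE ?inordK; try (by lia);
     repeat match goal with |- context [spar ?i] =>
       have := spar_cases i; generalize (spar i); intro end;
     lia) ].

Lemma poly_odd : N = (2 * k)%N ->
  indep_poly se = (1 + 'X *+ 2) ^+ k + 'X * (1 + 'X) ^+ k.
Proof.
move=> hN; rewrite top -(IPL (leqnn k)) -(IPE (leqnn k)).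
congr (_ + _); [|congr (_ * _)]; congr IP; apply/setP => x; rewrite !inE;
  apply/idP/idP; have := spar_cases x; have := ltn_ord x; lia.
Qed.

Lemma poly_L1 : N = (2 * k).+1 -> a = 0%N ->
  indep_poly se = (1 + 'X *+ 2) ^+ k * (1 + 'X) + 'X * (1 + 'X) ^+ k.
Proof.
move=> hN ha0; rewrite top -(IPL (leqnn k)) -(IPE (leqnn k)).
rewrite -(IP1 se_sym se_irr (inord (2 * k).+1)) -(IP_union se_sym); try side.
congr (_ + _); [|congr (_ * _)]; congr IP; apply/setP => x; rewrite !inE ?eq_inord;
  try side; apply/idP/idP; have := spar_cases x; have := ltn_ord x; lia.
Qed.

Lemma poly_Y j : N = (2 * k).+1 -> a = k -> k = j.+1 ->
  indep_poly se = (1 + 'X *+ 2) ^+ j * ((1 + 'X) ^+ 2 + 'X) + 'X * ((1 + 'X) ^+ k * (1 + 'X)).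
Proof.
move=> hN ha0 hk; have hj : (j <= k)%N by lia.
rewrite top -(IPL hj) -(IPE (leqnn k)).
rewrite -(IP3 se_sym se_irr (a := inord k) (b := inord (2 * k)) (c := inord (2 * k).+1)); try side.
rewrite -(IP1 se_sym se_irr (inord (2 * k).+1)) -!(IP_union se_sym); try side.
congr (_ + _); [|congr (_ * _)]; congr IP; apply/setP => x; rewrite !inE ?eq_inord;
  try side; apply/idP/idP; have := spar_cases x; have := ltn_ord x; lia.
Qed.

Lemma poly_L3 j : N = (2 * k).+1 -> a = (2 * k)%N -> k = j.+1 ->
  indep_poly se = (1 + 'X *+ 2) ^+ j * ((1 + 'X) ^+ 2 + 'X) + 'X * ((1 + 'X) ^+ j * (1 + 'X *+ 2)).
Proof.
move=> hN ha0 hk; have hj : (j <= k)%N by lia.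
rewrite top -(IPL hj) -(IPE hj).
rewrite -(IP3 se_sym se_irr (a := inord (2 * k)) (b := inord k) (c := inord (2 * k).+1)); try side.
rewrite -(IP2e se_sym se_irr (a := inord (2 * k)) (b := inord (2 * k).+1)); try side.
rewrite -!(IP_union se_sym); try side.
congr (_ + _); [|congr (_ * _)]; congr IP; apply/setP => x; rewrite !inE ?eq_inord;
  try side; apply/idP/idP; have := spar_cases x; have := ltn_ord x; lia.
Qed.
End Spider.
Section Signs.
Variable R : realFieldType.

Lemma powle (x y : R) n : 0 <= x -> x <= y -> x ^+ n <= y ^+ n.
Proof.
move=> hx hxy; apply: lerXn2r => //; rewrite nnegrE //; exact: le_trans hxy.
Qed.

Lemma two_exp_ge1 k : 1 <= (2 : R) ^+ k.
Proof. by apply: exprn_ege1; lra. Qed.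

Lemma odd_A k (u : R) : u = 2 ^+ k ->
  0 <= (-1) ^+ k * ((1 + (- u) *+ 2) ^+ k + (- u) * (1 + (- u)) ^+ k).
Proof.
move=> hu'; have hu : 1 <= u by rewrite hu'; exact: two_exp_ge1.
have -> : (-1) ^+ k * ((1 + (- u) *+ 2) ^+ k + (- u) * (1 + (- u)) ^+ k) =
   (u *+ 2 - 1) ^+ k - (u *+ 2 - 2) ^+ k.
  rewrite mulrDr mulrCA -!exprMn.
  have -> : (u *+ 2 - 2) ^+ k = u * (u - 1) ^+ k.
    by rewrite hu' -exprMn; congr (_ ^+ _); rewrite -hu'; ring.
  have -> : (-1) * (1 + - u *+ 2) = u *+ 2 - 1 by ring.
  have -> : (-1) * (1 + - u) = u - 1 by ring.
  ring.
rewrite subr_ge0; apply: powle; lra.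
Qed.

Lemma odd_B k (B : R) : B = 3 ^+ k + 1 ->
  (-1) ^+ k * ((1 + (- B) *+ 2) ^+ k + (- B) * (1 + (- B)) ^+ k) <= 0.
Proof.
move=> hB; have h3 : 1 <= (3 : R) ^+ k by apply: exprn_ege1; lra.
have -> : (-1) ^+ k * ((1 + (- B) *+ 2) ^+ k + (- B) * (1 + (- B)) ^+ k) =
   (B *+ 2 - 1) ^+ k - B * (B - 1) ^+ k.
  rewrite mulrDr mulrCA -!exprMn.
  have -> : (-1) * (1 + - B *+ 2) = B *+ 2 - 1 by ring.
  have -> : (-1) * (1 + - B) = B - 1 by ring.
  ring.
rewrite subr_le0; apply: (@le_trans _ _ ((3 * (B - 1)) ^+ k)).
  apply: powle; rewrite hB; lra.
rewrite exprMn; apply: ler_wpM2r; first by apply: exprn_ge0; rewrite hB; lra.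
rewrite hB; lra.
Qed.


Definition fY (x : R) j := (1 + x *+ 2) ^+ j * ((1 + x) ^+ 2 + x) + x * ((1 + x) ^+ j.+1 * (1 + x)).

Lemma fY_id (y : R) j : (-1) ^+ j * fY (- y) j =
  (y *+ 2 - 1) ^+ j * (y ^+ 2 - y *+ 3 + 1) - y * ((y - 1) ^+ j * (y - 1) ^+ 2).
Proof.
have E1 : (1 + (- y) *+ 2) ^+ j = (-1) ^+ j * (y *+ 2 - 1) ^+ j.
  by rewrite -exprMn; congr (_ ^+ _); ring.
have E2 : (1 + (- y)) ^+ j = (-1) ^+ j * (y - 1) ^+ j.
  by rewrite -exprMn; congr (_ ^+ _); ring.
have Es : (-1) ^+ j * (-1) ^+ j = 1 :> R by rewrite -exprMn mulrNN mulr1 expr1n.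
rewrite /fY [(1 + - y) ^+ j.+1]exprSr E1 E2.
transitivity (((-1) ^+ j * (-1) ^+ j) *
  ((y *+ 2 - 1) ^+ j * (y ^+ 2 - y *+ 3 + 1) - y * ((y - 1) ^+ j * (y - 1) ^+ 2))).
  ring.
by rewrite Es mul1r.
Qed.

Lemma Y_A i (t : R) : (2 <= i)%N -> t = 2 ^+ i -> 0 <= (-1) ^+ i.+1 * fY (- t) i.+1.
Proof.
move=> hi ht; rewrite fY_id.
have ht4 : 4 <= t.
  rewrite ht -(subnKC hi) exprD; have := two_exp_ge1 (i - 2); rewrite expr2; nra.
set P := (t - 1) ^+ i.+1.
have hP : 0 <= P by apply: exprn_ge0; lra.
have hc : 0 <= t ^+ 2 - t *+ 3 + 1 by rewrite expr2; nra.
have h1 : (t *+ 2 - 2) ^+ i.+1 = t *+ 2 * P.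
  have -> : t *+ 2 - 2 = 2 * (t - 1) by ring.
  rewrite exprMn exprS -ht /P; ring.
have h2 : (t *+ 2 - 2) ^+ i.+1 * (t ^+ 2 - t *+ 3 + 1) <=
          (t *+ 2 - 1) ^+ i.+1 * (t ^+ 2 - t *+ 3 + 1).
  apply: ler_wpM2r => //; apply: powle; lra.
rewrite h1 in h2; rewrite subr_ge0; apply: le_trans h2; rewrite -subr_ge0.
have -> : t *+ 2 * P * (t ^+ 2 - t *+ 3 + 1) - t * (P * (t - 1) ^+ 2) =
  (t * P) * (t ^+ 2 - t *+ 4 + 1) by ring.
apply: mulr_ge0; first by apply: mulr_ge0 => //; lra.
rewrite expr2; nra.
Qed.

Lemma Y_B j (B : R) : (1 <= j)%N -> B = 3 ^+ j + 1 -> (-1) ^+ j * fY (- B) j <= 0.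
Proof.
move=> hj hB; rewrite fY_id.
have h3 : 3 <= (3 : R) ^+ j.
  rewrite -(subnKC hj) exprD expr1; have : 1 <= (3 : R) ^+ (j - 1) by apply: exprn_ege1; lra.
  nra.
have hB4 : 4 <= B by rewrite hB; lra.
set c := B ^+ 2 - B *+ 3 + 1.
have hc : 0 <= c by rewrite /c expr2; nra.
have hc' : c <= (B - 1) ^+ 2 by rewrite /c expr2; nra.
set P := (B - 1) ^+ j.
have hP : 0 <= P by apply: exprn_ge0; lra.
rewrite subr_le0.
apply: (@le_trans _ _ ((3 * (B - 1)) ^+ j * c)).
  apply: ler_wpM2r => //; apply: powle; lra.
rewrite exprMn -/P.
apply: (@le_trans _ _ (B * P * c)).
  apply: ler_wpM2r => //; apply: ler_wpM2r => //; lra.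
rewrite mulrA; apply: ler_wpM2l; first by apply: mulr_ge0; lra.
exact: hc'.
Qed.
End Signs.
Section Final.

Lemma ivt_prod (p : {poly algR}) (a b : algR) : a <= b -> p.[a] * p.[b] <= 0 ->
  exists2 x, a <= x <= b & root p x.
Proof.
move=> hab hp.
have [ha0|ha0|ha0] := ltgtP p.[a] 0.
- have hb : 0 <= p.[b] by rewrite -(nmulr_rle0 _ ha0).
  by apply: poly_ivt => //; rewrite (ltW ha0) hb.
- have hb : p.[b] <= 0 by rewrite -(pmulr_rle0 _ ha0).
  have [x hx hr] : exists2 x, a <= x <= b & root (- p) x.
    by apply: poly_ivt => //; rewrite !hornerN oppr_le0 oppr_ge0 (ltW ha0) hb.
  by exists x => //; move: hr; rewrite rootN.
- by exists a; rewrite ?lexx ?hab // /root ha0.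
Qed.

Lemma root_from_ivt (pR : {poly algR}) (lo hi : algR) (bnd : algC) :
  lo <= hi -> pR.[lo] * pR.[hi] <= 0 -> hi <= 0 -> bnd <= - algRval hi ->
  exists z, root (map_poly algRval pR) z /\ bnd <= `|z|.
Proof.
move=> hlh hp hhi hb.
have [x /andP[hx1 hx2] hr] := ivt_prod hlh hp.
exists (algRval x); split; first exact: rmorph_root.
have hx0 : algRval x <= 0 by exact: (le_trans hx2 hhi).
rewrite ler0_norm //; apply: (le_trans hb); rewrite lerN2; exact: hx2.
Qed.



Lemma two_le_three k : (2 : algR) ^+ k <= 3 ^+ k + 1.
Proof.
have : (2 : algR) ^+ k <= 3 ^+ k by apply: powle; lra.
lra.
Qed.

Lemma odd_case k : exists e : rel 'I_(2 * k).+1, is_tree e /\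
    exists z : algC, root (indep_poly e) z /\ MT_bound (2 * k).+1 <= `|z|.
Proof.
exists (@se (2 * k) k 0); split.
  apply: pe_tree => j hj; apply: (@spar_lt (2 * k)) => //; lia.
rewrite (@poly_odd (2 * k) k 0) //; try lia.
pose pR : {poly algR} := (1 + 'X *+ 2) ^+ k + 'X * (1 + 'X) ^+ k.
have -> : (1 + 'X *+ 2) ^+ k + 'X * (1 + 'X) ^+ k = map_poly algRval pR.
  by rewrite /pR !(rmorphD, rmorphM, rmorphXn, rmorphMn, rmorph1) /= !map_polyX.
apply: (@root_from_ivt _ (- (3 ^+ k + 1)) (- 2 ^+ k)).
- rewrite lerN2; exact: two_le_three.
- have hA := odd_A (R := algR) (erefl ((2 : algR) ^+ k)).
  have hB := odd_B (R := algR) (k := k) (erefl ((3 : algR) ^+ k + 1)).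
  have sq : forall x y : algR, x * y = ((-1) ^+ k * x) * ((-1) ^+ k * y).
    by move=> x y; rewrite mulrACA -exprMn mulrNN mulr1 expr1n mul1r.
  rewrite (sq pR.[_]) /pR !(hornerD, hornerM, hornerMn, horner_exp, hornerX, hornerC).
  by apply: mulr_le0_ge0.
- rewrite oppr_le0; apply: exprn_ge0; lra.
- rewrite /MT_bound /= oddM /=.
  rewrite (_ : ((2 * k).+1 - 1) %/ 2 = k)%N; last by lia.
  by rewrite raddfN /= rmorphXn rmorph_nat opprK.
Qed.


Lemma even_small k : (k <= 2)%N -> exists e : rel 'I_(2 * k).+2, is_tree e /\
    exists z : algC, root (indep_poly e) z /\ MT_bound (2 * k).+2 <= `|z|.
Proof.
move=> hk; exists (@se (2 * k).+1 k 0); split.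
  apply: pe_tree => j hj; apply: (@spar_lt (2 * k).+1) => //; lia.
rewrite (@poly_L1 (2 * k).+1 k 0) //; try lia.
case: k hk => [|[|[|//]]] _ /=.
- exists (- 2^-1); split.
    apply/eqP; rewrite !(hornerD, hornerM, hornerMn, horner_exp, hornerX, hornerC) /=.
    rewrite expr0 mul1r mulr1; by field.
  rewrite /MT_bound /=.
  rewrite (_ : (_ %/ 2)%Z = - 2%:Z) //.
  rewrite -exprnN normrN ger0_norm ?invr_ge0 ?ler0n //.
  rewrite lef_pV2 ?posrE ?exprn_gt0 ?ltr0n //.
  by rewrite expr2 -natrM ler_nat.
- exists (-1); split.
    apply/eqP; rewrite !(hornerD, hornerM, hornerMn, horner_exp, hornerX, hornerC) /=.
    ring.
  rewrite /MT_bound /=.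
  rewrite (_ : (_ %/ 2)%Z = - 1%:Z) //.
  rewrite -exprnN normrN normr1 expr1 invf_le1 ?ltr0n //.
  by rewrite ler1n.
- exists (-1); split.
    apply/eqP; rewrite !(hornerD, hornerM, hornerMn, horner_exp, hornerX, hornerC) /=.
    ring.
  rewrite /MT_bound /=.
  by rewrite (_ : (_ %/ 2)%Z = 0) // expr0z normrN normr1.
Qed.


Lemma even_8 : exists e : rel 'I_8, is_tree e /\
    exists z : algC, root (indep_poly e) z /\ MT_bound 8 <= `|z|.
Proof.
exists (@se 7 3 6); split.
  apply: pe_tree => j hj; apply: (@spar_lt 7 3 6) => //.
rewrite (@poly_L3 7 3 6 isT isT isT 2) //.
pose pR : {poly algR} := (1 + 'X *+ 2) ^+ 2 * ((1 + 'X) ^+ 2 + 'X) + 'X * ((1 + 'X) ^+ 2 * (1 + 'X *+ 2)).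
have -> : (1 + 'X *+ 2) ^+ 2 * ((1 + 'X) ^+ 2 + 'X) + 'X * ((1 + 'X) ^+ 2 * (1 + 'X *+ 2))
   = map_poly algRval pR.
  by rewrite /pR !(rmorphD, rmorphM, rmorphXn, rmorphMn, rmorph1) /= !map_polyX.
apply: (@root_from_ivt _ (- 3) (- 2)).
- lra.
- have -> : pR.[-3] = 85.
    by rewrite /pR !(hornerD, hornerM, hornerMn, horner_exp, hornerX, hornerC) /=; ring.
  have -> : pR.[-2] = -3.
    by rewrite /pR !(hornerD, hornerM, hornerMn, horner_exp, hornerX, hornerC) /=; ring.
  lra.
- lra.
- rewrite /MT_bound /= (_ : (_ %/ 2)%Z = 1) // expr1z.
  rewrite raddfN /= opprK; exact: lexx.
Qed.

Definition pY (j : nat) : {poly algR} :=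
  (1 + 'X *+ 2) ^+ j * ((1 + 'X) ^+ 2 + 'X) + 'X * ((1 + 'X) ^+ j.+1 * (1 + 'X)).

Lemma pY_horner j x : (pY j).[x] = fY x j.
Proof. by rewrite /pY /fY !(hornerD, hornerM, hornerMn, horner_exp, hornerX, hornerC). Qed.

Lemma mapY (m : nat) :
  (1 + 'X *+ 2) ^+ m * ((1 + 'X) ^+ 2 + 'X) + 'X * ((1 + 'X) ^+ m.+1 * (1 + 'X)) =
  map_poly algRval (pY m).
Proof.
rewrite /pY !expr2 !(rmorphD, rmorphM, rmorphXn, rmorphMn, rmorph1) /= !map_polyX.
by [].
Qed.

Lemma even_big i : (2 <= i)%N -> exists e : rel 'I_(2 * i.+2).+2, is_tree e /\
    exists z : algC, root (indep_poly e) z /\ MT_bound (2 * i.+2).+2 <= `|z|.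
Proof.
move=> hi; exists (@se (2 * i.+2).+1 i.+2 i.+2); split.
  apply: pe_tree => j hj; apply: (@spar_lt (2 * i.+2).+1 i.+2 i.+2) => //; lia.
rewrite (@poly_Y (2 * i.+2).+1 i.+2 i.+2 _ _ _ i.+1) //; try lia.
rewrite mapY.
apply: (@root_from_ivt _ (- (3 ^+ i.+1 + 1)) (- 2 ^+ i)).
- rewrite lerN2.
  have h1 : (2 : algR) ^+ i <= 3 ^+ i by apply: powle; lra.
  have h2 : (0 : algR) <= 3 ^+ i by apply: exprn_ge0; lra.
  rewrite exprS; lra.
- have hA := Y_A (R := algR) hi (erefl ((2 : algR) ^+ i)).
  have hB := Y_B (R := algR) (j := i.+1) isT (erefl ((3 : algR) ^+ i.+1 + 1)).
  have sq : forall x y : algR, x * y = ((-1) ^+ i.+1 * x) * ((-1) ^+ i.+1 * y).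
    by move=> x y; rewrite mulrACA -exprMn mulrNN mulr1 expr1n mul1r.
  rewrite (sq (pY _).[_]) !pY_horner.
  by apply: mulr_le0_ge0.
- rewrite oppr_le0; apply: exprn_ge0; lra.
- rewrite /MT_bound oddS oddS negbK oddM /=.
  rewrite (_ : (_ %/ 2)%Z = i%:Z); last first.
    rewrite (_ : _ - 6 = i%:Z * 2)%R ?mulzK //; lia.
  by rewrite raddfN /= rmorphXn rmorph_nat opprK.
Qed.
End Final.

Theorem proposition3 (n : nat) : (1 <= n)%N ->
  exists e : rel 'I_n, is_tree e /\
    exists z : algC, root (indep_poly e) z /\ MT_bound n <= `|z|.
Proof.
move=> hn.
have [k [hk|hk]] : exists k, n = (2 * k).+1 \/ n = (2 * k).+2.
  by exists (n.-1 %/ 2)%N; lia.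
  by subst n; exact: odd_case.
subst n; case: (ltnP k 3) => h.
  by apply: even_small; lia.
case: (eqVneq k 3) => [->|h3]; first exact: even_8.
have -> : k = (k - 2).+2 by lia.
apply: even_big; lia.
Qed.
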